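(* Let $f : 2^N \to \mathbb{R}_{\ge 0}$ be a non-negative submodular function, let $r \ge 1$ be an integer, $\alpha \in [0,1]$ and $v^\star \in \mathbb{R}$. Consider a randomized procedure with $S_0 = \emptyset$ and $S_i = S_{i-1} \cup T_i$ for $i = 1,\dots,r$, where $T_i$ is a random set (returned by the subroutine SIEVE at iteration $i$ of BLITS). Assume that for every $i \in \{1,\dots,r\}$, given the current solution $S_{i-1}$, the returned set satisfies $$\mathbb{E}\left[f_{S_{i-1}}(T_i)\right] \ge \frac{\alpha}{r}\left(\left(1-\frac{1}{r}\right)^{i-1} v^\star - f(S_{i-1})\right).$$ Then $\mathbb{E}[f(S_r)] \ge \frac{\alpha}{e}\, v^\star$.
   Context: For sets $S,T \subseteq N$, $f_S(T) = f(S\cup T) - f(S)$. $f$ is submodular if $f(S\cup\{a\}) - f(S) \ge f(T\cup\{a\}) - f(T)$ whenever $S\subseteq T$ and $a\notin T$. BLITS is the algorithm that starts with $S=\emptyset$ and for $r$ iterations adds to $S$ a block returned by a subroutine called SIEVE. *)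

(* Defs.v *)
From HB Require Import structures.
From mathcomp Require Import all_boot all_order all_algebra.
From mathcomp Require Import all_classical all_reals all_analysis.
Set Implicit Arguments. Unset Strict Implicit. Unset Printing Implicit Defensive.
Import Order.TTheory GRing.Theory Num.Theory.
Local Open Scope ring_scope.

Definition marginal (R : numDomainType) (N : finType) (f : {set N} -> R)
  (S T : {set N}) : R := f (S :|: T) - f S.

Definition submodular (R : numDomainType) (N : finType) (f : {set N} -> R) : Prop :=
  forall (S T : {set N}) (a : N), S \subset T -> a \notin T ->
    f (a |: T) - f T <= f (a |: S) - f S.

Fixpoint blits_sol (N : finType) (Omega : Type) (T : nat -> Omega -> {set N})
  (i : nat) (w : Omega) : {set N} :=
  match i with
  | 0 => finset.set0
  | i'.+1 => blits_sol T i' w :|: T i'.+1 w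
  end.

(* Main.v *)
Require Import Defs.
From HB Require Import structures.
From mathcomp Require Import all_boot all_order all_algebra.
From mathcomp Require Import all_classical all_reals all_analysis.
From mathcomp Require Import ring lra.
Import Order.TTheory GRing.Theory Num.Theory.
Local Open Scope classical_set_scope.
Local Open Scope ring_scope.

Section L.
Context {R : realType} {d : measure_display} {Omega : measurableType d}
  (P : probability Omega R).

Lemma preim_meas {K : finType} {X : Omega -> K}
  (hX : forall k, measurable (X @^-1` [set k])) (Y : set K) :
  measurable (X @^-1` Y).
Proof.
have -> : X @^-1` Y = \bigcup_(k in Y) X @^-1` [set k].
  apply/seteqP; split => [w Yw|w [k Yk /= Xk]]; first by exists (X w).
  by rewrite /preimage /= Xk.
by apply: fin_bigcup_measurable => //; exact: finite_finset.
Qed.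

Lemma intL {K : finType} {X : Omega -> K}
  (hX : forall k, measurable (X @^-1` [set k])) (h : K -> R) {D : set Omega}
  (mD : measurable D) :
  (\int[P]_(w in D) (h (X w))%:E =
   (\sum_(k : K) h k * fine (P (D `&` X @^-1` [set k])))%:E)%E.
Proof.
transitivity (\int[P]_(w in D) (\sum_(k : K) (h k)%:E * (\1_(X @^-1` [set k]) w)%:E))%E.
  apply: eq_integral => w _.
  rewrite (bigD1 (X w)) //= indicE mem_set // mule1 big1 ?adde0 // => k hk.
  rewrite indicE memNset ?mule0 //= => e; by rewrite e eqxx in hk.
rewrite integral_sum //; last first.
  move=> k; apply: integrableZl => //.
  apply: (integrableS measurableT) => //; exact: integrable_indic.
rewrite -sumEFin; apply: eq_bigr => k _.
rewrite integralZl //; last first.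
  apply: (integrableS measurableT) => //; exact: integrable_indic.
rewrite integral_indic // setIC EFinM fineK //.
apply: fin_num_measure; exact: measurableI.
Qed.
End L.
Lemma rho_bound (R : realType) (m : nat) :
  (expR 1)^-1 <= (1 - (m.+1)%:R^-1 : R) ^+ m.
Proof.
have e0 : (0 : R) < expR 1 by exact: expR_gt0.
have e1 := expR_ge1Dx (1 : R).
rewrite -div1r ler_pdivrMr //.
case: m => [|m]; first by rewrite expr0 mul1r; lra.
set n := m.+1.
have n0 : (0 : R) < n%:R by rewrite ltr0n.
have h1 : (1 + n%:R^-1 : R) <= expR (n%:R^-1) by exact: expR_ge1Dx.
have h2 : (1 + n%:R^-1 : R) ^+ n <= expR 1.
  have -> : (expR 1 : R) = expR (n%:R^-1) ^+ n.
    by rewrite -expRM_natl mulfV // gt_eqF.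
  apply: lerXn2r => //; rewrite ?nnegrE ?expR_ge0 //.
have h3 : (1 - (n.+1)%:R^-1 : R) * (1 + n%:R^-1) = 1.
  rewrite -[n.+1]addn1 natrD; field; lra.
have r0 : (0 : R) <= (1 - (n.+1)%:R^-1) ^+ n.
  apply: exprn_ge0; rewrite subr_ge0 invf_le1 ?ltr0n // ler1n //.
have key : (1 : R) = (1 - (n.+1)%:R^-1) ^+ n * (1 + n%:R^-1) ^+ n.
  by rewrite -exprMn h3 expr1n.
rewrite {1}key; exact: ler_wpM2l.
Qed.

Lemma rec_bound (R : realType) (a : nat -> R) (r : nat) (alpha v : R) :
 (0 < r)%N -> 0 <= alpha <= 1 -> (forall j, 0 <= a j) ->
 (forall j, (j < r)%N ->
    alpha / r%:R * ((1 - r%:R^-1) ^+ j * v - a j) <= a j.+1 - a j) ->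
 0 <= v -> forall i, (i <= r)%N ->
 i%:R * (alpha / r%:R) * (1 - r%:R^-1) ^+ i.-1 * v <= a i.
Proof.
move=> r0 /andP[al0 al1] a0 H v0.
have rR : (1 : R) <= r%:R by rewrite ler1n.
have ri0 : (0 : R) <= r%:R^-1 by rewrite invr_ge0 ler0n.
have ri1 : r%:R^-1 <= (1 : R) by rewrite invf_le1 // ltr0n.
set t := alpha / r%:R.
have t0 : 0 <= t by rewrite /t mulr_ge0.
have t1 : t <= r%:R^-1 by rewrite /t ler_pdivrMr ?ltr0n // mulVf ?gt_eqF ?ltr0n.
set rho := 1 - r%:R^-1.
have rho0 : 0 <= rho by rewrite /rho subr_ge0.
elim => [|i IH] lir; first by rewrite mul0r !mul0r.
have Hi := H i lir; rewrite -/t -/rho in Hi.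
case: i IH lir Hi => [|m] IH lir Hi.
  rewrite expr0 /= mul1r mulr1 in Hi *.
  have : 0 <= (1 - t) * a 0%N by apply: mulr_ge0 => //; lra.
  nra.
have IH' := IH (ltnW lir).
rewrite /= in IH' *.
rewrite exprSr in Hi *.
set x := rho ^+ m in IH' Hi *.
have x0 : 0 <= x by rewrite /x exprn_ge0.
have e1 : 0 <= (1 - t - rho) * (m.+1%:R * t * x * v).
  apply: mulr_ge0; first by rewrite /rho; lra.
  by rewrite !mulr_ge0.
have e2 : 0 <= (1 - t) * (a m.+1 - m.+1%:R * t * x * v).
  apply: mulr_ge0; first by lra.
  by rewrite subr_ge0.
have -> : (m.+2%:R : R) = m.+1%:R + 1 by rewrite natr1.
nra.
Qed.

Definition Xp {N : finType} {Omega : Type} (T : nat -> Omega -> {set N})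
  (j : nat) (w : Omega) : {set N} * {set N} := (blits_sol T j w, T j.+1 w).

Lemma sum_ind {R : realType} {I : finType} (i0 : I) (F : I -> R) :
  \sum_(A : I) (i0 == A)%:R * F A = F i0.
Proof.
rewrite (bigD1 i0) //= eqxx mul1r big1 ?addr0 // => A /negPf.
by rewrite eq_sym => ->; rewrite mul0r.
Qed.

Theorem lemma2 (R : realType) (N : finType) (f : {set N} -> R) (r : nat)
  (alpha vstar : R) (d : measure_display) (Omega : measurableType d)
  (P : probability Omega R) (T : nat -> Omega -> {set N}) :
  (forall S : {set N}, 0 <= f S) ->
  submodular f ->
  (0 < r)%N ->
  0 <= alpha <= 1 ->
  (forall (i : nat) (B : {set N}), measurable (T i @^-1` [set B])) ->
  (forall i : nat, (1 <= i <= r)%N -> forall A : {set N},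
     (P [set w | blits_sol T i.-1 w = A] *
        (alpha / r%:R * ((1 - r%:R^-1) ^+ i.-1 * vstar - f A))%:E <=
      \int[P]_(w in [set w | blits_sol T i.-1 w = A])
         (marginal f (blits_sol T i.-1 w) (T i w))%:E)%E) ->
  ((alpha / expR 1 * vstar)%:E <= \int[P]_w (f (blits_sol T r w))%:E)%E.
Proof.
move=> f0 _ r0 al HT Hyp.
have mXS : forall j, (forall A, measurable (blits_sol T j @^-1` [set A])) ->
    forall k, measurable (Xp T j @^-1` [set k]).
  move=> j mSj k.
  have -> : Xp T j @^-1` [set k] =
      blits_sol T j @^-1` [set k.1] `&` T j.+1 @^-1` [set k.2].
    apply/seteqP; split => w /=; first by move=> <-.
    by case: k => B C /= [<- <-].
  exact: measurableI.
have mS : forall j A, measurable (blits_sol T j @^-1` [set A]).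
  elim => [|j IH] A.
    have [<-|nA] := eqVneq finset.set0 A.
      have -> : blits_sol T 0 @^-1` [set finset.set0] = setT by apply/seteqP; split.
      exact: measurableT.
    have -> : blits_sol T 0 @^-1` [set A] = set0.
      by apply/seteqP; split => w //= eA; rewrite eA eqxx in nA.
    exact: measurable0.
  have -> : blits_sol T j.+1 @^-1` [set A] =
    Xp T j @^-1` [set k | k.1 :|: k.2 = A] by [].
  exact: preim_meas (mXS j (IH)) _.
have mX : forall j k, measurable (Xp T j @^-1` [set k]).
  by move=> j; apply: mXS; exact: mS.
pose a j := \sum_(B : {set N}) f B * fine (P (setT `&` blits_sol T j @^-1` [set B])).
have ha : forall j, (\int[P]_w (f (blits_sol T j w))%:E = (a j)%:E)%E.
  by move=> j; exact: (intL P (mS j) f measurableT).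
have a0 : forall j, 0 <= a j.
  move=> j; apply: sumr_ge0 => B _; apply: mulr_ge0 => //.
  by apply: fine_ge0; apply: measure_ge0.
pose q j k := fine (P (setT `&` Xp T j @^-1` [set k])).
have F1 : forall j, a j = \sum_k f k.1 * q j k.
  move=> j; apply: EFin_inj; rewrite -ha.
  exact: (intL P (mX j) (fun k => f k.1) measurableT).
have F2 : forall j, a j.+1 = \sum_k f (k.1 :|: k.2) * q j k.
  move=> j; apply: EFin_inj; rewrite -ha.
  exact: (intL P (mX j) (fun k => f (k.1 :|: k.2)) measurableT).
have I1 : (\int[P]_(w in setT) (cst 1%:E) w = 1)%E.
  rewrite integral_cst // mul1e. exact: probability_setT.
have F3 : forall j, \sum_k q j k = 1.
  move=> j; apply: EFin_inj; rewrite -I1.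
  rewrite (intL P (mX j) (fun _ => 1) measurableT).
  by congr (_%:E); apply: eq_bigr => k _; rewrite mul1r.
pose t := alpha / r%:R.
pose c j A := t * ((1 - r%:R^-1) ^+ j * vstar - f A).
have step : forall j, (j < r)%N ->
    t * ((1 - r%:R^-1) ^+ j * vstar - a j) <= a j.+1 - a j.
  move=> j ljr.
  have key : forall A k,
      fine (P ([set w | blits_sol T j w = A] `&` Xp T j @^-1` [set k])) =
      (k.1 == A)%:R * q j k.
    move=> A k; rewrite /q; case: eqP => [e|ne].
    - rewrite mul1r; congr (fine (P _)); apply/seteqP; split => w /=.
        by move=> [_ ->].
      by move=> [_ Xk]; split => //; rewrite -e -Xk.
    - rewrite mul0r.
      have -> : [set w | blits_sol T j w = A] `&` Xp T j @^-1` [set k] = set0.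
        apply/seteqP; split => w //= [Sw Xk]; apply: ne; rewrite -Xk -Sw //.
      by rewrite measure0.
  pose m k := marginal f k.1 k.2.
  have HA : forall A, (\sum_k (k.1 == A)%:R * q j k) * c j A <=
                      \sum_k m k * ((k.1 == A)%:R * q j k).
    move=> A; have := Hyp j.+1 ljr A; rewrite /=.
    have mE : measurable [set w | blits_sol T j w = A] := mS j A.
    rewrite (intL P (mX j) (fun k => marginal f k.1 k.2) mE) /=.
    have PE : P [set w | blits_sol T j w = A] =
        (\sum_k 1 * fine (P ([set w | blits_sol T j w = A] `&` Xp T j @^-1` [set k])))%:E.
      transitivity (\int[P]_(w in [set w | blits_sol T j w = A]) (cst 1%:E) w)%E.
        by rewrite integral_cst // mul1e.
      exact: (intL P (mX j) (fun _ => 1) mE).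
    have e1 : \sum_k 1 * fine (P ([set w | blits_sol T j w = A] `&` Xp T j @^-1` [set k]))
        = \sum_k (k.1 == A)%:R * q j k.
      by apply: eq_bigr => k _; rewrite key mul1r.
    have e2 : \sum_k marginal f k.1 k.2 * fine (P ([set w | blits_sol T j w = A] `&` Xp T j @^-1` [set k]))
        = \sum_k m k * ((k.1 == A)%:R * q j k).
      by apply: eq_bigr => k _; rewrite key.
    by rewrite PE e1 e2 -EFinM lee_fin.
  have HS : \sum_A (\sum_k (k.1 == A)%:R * q j k) * c j A <=
      \sum_A \sum_k m k * ((k.1 == A)%:R * q j k).
    by apply: ler_sum => A _; exact: HA.
  have L1 : \sum_A (\sum_k (k.1 == A)%:R * q j k) * c j A = \sum_k q j k * c j k.1.
    transitivity (\sum_A \sum_k (k.1 == A)%:R * (q j k * c j A)).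
      apply: eq_bigr => A _; rewrite mulr_suml; apply: eq_bigr => k _.
      by rewrite mulrA.
    rewrite exchange_big; apply: eq_bigr => k _.
    exact: (sum_ind k.1 (fun A => q j k * c j A)).
  have L2 : \sum_A \sum_k m k * ((k.1 == A)%:R * q j k) = \sum_k m k * q j k.
    rewrite exchange_big; apply: eq_bigr => k _.
    transitivity (\sum_A (k.1 == A)%:R * (m k * q j k)).
      by apply: eq_bigr => A _; rewrite mulrCA.
    exact: (sum_ind k.1 (fun A => m k * q j k)).
  have L3 : \sum_k q j k * c j k.1 = t * ((1 - r%:R^-1) ^+ j * vstar - a j).
    transitivity (\sum_k (t * ((1 - r%:R^-1) ^+ j * vstar) * q j k - t * (f k.1 * q j k))).
      by apply: eq_bigr => k _; rewrite /c; ring.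
    rewrite sumrB -!mulr_sumr F3 -F1; ring.
  have L4 : \sum_k m k * q j k = a j.+1 - a j.
    rewrite (F2 j) (F1 j) -sumrB; apply: eq_bigr => k _; rewrite /m /marginal; ring.
  by rewrite -L3 -L4 -L1 -L2.
rewrite ha lee_fin.
have [v0|v0] := leP 0 vstar; last first.
  apply: le_trans (a0 r); apply: mulr_ge0_le0; last exact: ltW.
  case/andP: al => al0 _; apply: divr_ge0 => //; exact: expR_ge0.
have := @rec_bound R a r alpha vstar r0 al a0 step v0 r (leqnn r).
have [n rn] : exists n, r = n.+1 by exists r.-1; rewrite prednK.
rewrite /t rn /=.
have rb := rho_bound R n.
case/andP: al => al0 al1.
have -> : (n.+1%:R * (alpha / n.+1%:R) : R) = alpha.
  by rewrite mulrCA mulfV ?mulr1 // pnatr_eq0.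
rewrite /=.
move: rb; set y := (1 - n.+1%:R^-1) ^+ n; set z := (expR 1)^-1 => rb.
have : 0 <= alpha * vstar * (y - z) by rewrite !mulr_ge0 // subr_ge0.
nra.
Qed.
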